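(* Let $\pi:P\to M$ be a principal fibre bundle with group $G=P^{-1}P$, in the setting described in the context, and assume $G$ is commutative. Then every horizontal equivariant $G$-valued $k$-form $\theta$ on $P$ can be written as $\theta=\pi^*(\Theta)$ for a unique $G$-valued $k$-form $\Theta$ on $M$, where $(\pi^*\Theta)(u_0,\dots,u_k):=\Theta(\pi(u_0),\dots,\pi(u_k))$.
   Context: Setting: $\Phi$ is a groupoid whose object set contains a set $M$ and an object $*\notin M$; $P$ is the set of arrows of $\Phi$ with domain $*$ and codomain in $M$; $\pi:P\to M$ is the codomain map; $G=P^{-1}P:=\Phi( *,* )$ acts on $P$ from the right by precomposition, freely and transitively on fibres. $M$ and $P$ carry reflexive symmetric neighbour relations $\sim$; an infinitesimal $k$-simplex is a $(k+1)$-tuple of mutual neighbours; $\pi$ preserves $\sim$; for every infinitesimal $k$-simplex $(a_0,\dots,a_k)$ in $M$ and every $x_0$ over $a_0$ there is an infinitesimal $k$-simplex $(x_0,\dots,x_k)$ in $P$ over it; the right action of each $g\in G$ preserves $\sim$. A $G$-valued $k$-form on $P$ (resp. on $M$) is a map assigning an element of $G$ to each infinitesimal $k$-simplex in $P$ (resp. $M$). A $k$-form $\theta$ on $P$ is horizontal if $\theta(u_0,u_1,\dots,u_k)=\theta(u_0,u_1g_1,\dots,u_kg_k)$ for every infinitesimal $k$-simplex $(u_0,\dots,u_k)$ and all $g_1,\dots,g_k\in G$ such that $(u_0,u_1g_1,\dots,u_kg_k)$ is still an infinitesimal $k$-simplex. It is equivariant if $\theta(u_0g,\dots,u_kg)=g^{-1}\theta(u_0,\dots,u_k)g$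 for every infinitesimal $k$-simplex and every $g\in G$. *)

(* Defs.v *)
From mathcomp Require Import all_boot.
Set Implicit Arguments. Unset Strict Implicit. Unset Printing Implicit Defensive.

Record groupoid := Groupoid {
  Ob : Type;
  Hom : Ob -> Ob -> Type;
  gcomp : forall a b c, Hom b c -> Hom a b -> Hom a c;
  idg : forall a, Hom a a;
  ginv : forall a b, Hom a b -> Hom b a;
  compA : forall a b c d (h : Hom c d) (g : Hom b c) (f : Hom a b),
    gcomp h (gcomp g f) = gcomp (gcomp h g) f;
  comp1f : forall a b (f : Hom a b), gcomp (idg b) f = f;
  compf1 : forall a b (f : Hom a b), gcomp f (idg a) = f;
  compVf : forall a b (f : Hom a b), gcomp (ginv f) f = idg a;
  compfV : forall a b (f : Hom a b), gcomp f (ginv f) = idg b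
}.
Arguments gcomp {g0 a b c}.
Arguments idg {g0}.
Arguments ginv {g0 a b}.
Arguments Hom : clear implicits.

Section Bundle.
Variables (Phi : groupoid) (M : Type) (obj : M -> Ob Phi) (star : Ob Phi).

(** P = arrows of Phi with domain [star] and codomain in M. *)
Definition Pt := { m : M & Hom Phi star (obj m) }.
Definition proj (u : Pt) : M := projT1 u.
Definition ract (u : Pt) (g : Hom Phi star star) : Pt := existT _ (projT1 u) (gcomp (projT2 u) g).
End Bundle.
Notation Gt star := (Hom _ star star) (only parsing).

Definition isimplex (X : Type) (nb : X -> X -> Prop) (k : nat) (x : 'I_k.+1 -> X) :=
  forall i j : 'I_k.+1, nb (x i) (x j).

Definition refl_sym (X : Type) (nb : X -> X -> Prop) :=
  (forall x, nb x x) /\ (forall x y, nb x y -> nb y x).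

(** G-valued k-forms are maps from (k+1)-tuples to G; only their values on
    infinitesimal k-simplices are meaningful (equalities of forms are always
    stated on simplices). *)
Definition horizontal (Phi : groupoid) (M : Type) (obj : M -> Ob Phi) (star : Ob Phi) (nP : Pt obj star -> Pt obj star -> Prop)
    (k : nat) (theta : ('I_k.+1 -> Pt obj star) -> Gt star) :=
  forall (u : 'I_k.+1 -> Pt obj star) (g : 'I_k.+1 -> Gt star),
    isimplex nP u -> g ord0 = idg star ->
    isimplex nP (fun i => ract (u i) (g i)) ->
    theta u = theta (fun i => ract (u i) (g i)).

Definition equivariant (Phi : groupoid) (M : Type) (obj : M -> Ob Phi) (star : Ob Phi) (nP : Pt obj star -> Pt obj star -> Prop)
    (k : nat) (theta : ('I_k.+1 -> Pt obj star) -> Gt star) :=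
  forall (u : 'I_k.+1 -> Pt obj star) (g : Gt star),
    isimplex nP u ->
    theta (fun i => ract (u i) g) = gcomp (ginv g) (gcomp (theta u) g).

Definition pullback (Phi : groupoid) (M : Type) (obj : M -> Ob Phi) (star : Ob Phi) (k : nat)
    (Theta : ('I_k.+1 -> M) -> Gt star) (u : 'I_k.+1 -> Pt obj star) :=
  Theta (fun i => proj (u i)).

(* Main.v *)
From Stdlib Require Import FunctionalExtensionality IndefiniteDescription ClassicalEpsilon.
Require Import Defs.
From mathcomp Require Import all_boot.

Lemma same_fibre {Phi : groupoid} {M : Type} {obj : M -> Ob Phi} {star : Ob Phi}
  {u v : Pt obj star} : proj u = proj v -> exists g, v = ract u g.
Proof.
case: u => m f; case: v => m' f' /= H; subst m'.
exists (gcomp (ginv f) f'); rewrite /ract /=.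
by rewrite Defs.compA compfV comp1f.
Qed.

Theorem proposition2
  (Phi : groupoid) (M : Type) (obj : M -> Ob Phi) (star : Ob Phi)
  (obj_inj : injective obj)
  (star_notin : forall m : M, obj m <> star)
  (nM : M -> M -> Prop) (nP : Pt obj star -> Pt obj star -> Prop)
  (nM_rs : refl_sym nM) (nP_rs : refl_sym nP)
  (proj_surj : forall m : M, exists u : Pt obj star, proj u = m)
  (proj_nb : forall u v, nP u v -> nM (proj u) (proj v))
  (lift : forall (k : nat) (a : 'I_k.+1 -> M), isimplex nM a ->
     forall x0 : Pt obj star, proj x0 = a ord0 ->
     exists x : 'I_k.+1 -> Pt obj star,
       [/\ isimplex nP x, x ord0 = x0 & forall i, proj (x i) = a i])
  (act_nb : forall (g : Gt star) u v, nP u v -> nP (ract u g) (ract v g))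
  (G_comm : forall g h : Gt star, gcomp g h = gcomp h g)
  (k : nat) (theta : ('I_k.+1 -> Pt obj star) -> Gt star)
  (theta_hor : horizontal nP theta) (theta_eq : equivariant nP theta) :
  exists Theta : ('I_k.+1 -> M) -> Gt star,
    (forall u, isimplex nP u -> theta u = pullback Theta u) /\
    (forall Theta' : ('I_k.+1 -> M) -> Gt star,
       (forall u, isimplex nP u -> theta u = pullback Theta' u) ->
       forall a, isimplex nM a -> Theta' a = Theta a).
Proof.
have key : forall u x, isimplex nP u -> isimplex nP x ->
    (forall i, proj (u i) = proj (x i)) -> theta u = theta x.
  move=> u x Hu Hx Hp.
  have [g0 Hg0] := same_fibre (Hp ord0).
  pose u' := fun i => ract (u i) g0.
  have Hu' : isimplex nP u' by move=> i j; apply: act_nb.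
  have E1 : theta u' = theta u.
    rewrite /u' theta_eq // (G_comm (theta u)) Defs.compA compVf comp1f //.
  have Hp' : forall i, proj (u' i) = proj (x i) by move=> i; rewrite -Hp.
  have [h Hh] : exists h : 'I_k.+1 -> Gt star, forall i, x i = ract (u' i) (h i).
    apply: (functional_choice (fun i g => x i = ract (u' i) g)) => i.
    exact: same_fibre.
  pose g := fun i : 'I_k.+1 => if i == ord0 then idg star else h i.
  have Ex : x = (fun i => ract (u' i) (g i)).
    apply: functional_extensionality => i; rewrite /g.
    case: eqP => [->|_]; last exact: Hh.
    by rewrite Hg0 /u' /ract /= compf1.
  rewrite -E1 Ex; apply: theta_hor => //.
  by rewrite -Ex.
pose Theta := fun a : 'I_k.+1 -> M =>
  match excluded_middle_informative
     (exists x, isimplex nP x /\ forall i, proj (x i) = a i) with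
  | left H => theta (proj1_sig (constructive_indefinite_description _ H))
  | right _ => idg star end.
have HT : forall u, isimplex nP u -> theta u = pullback Theta u.
  move=> u Hu; rewrite /pullback /Theta.
  case: excluded_middle_informative => [H|H]; last first.
    by exfalso; apply: H; exists u.
  case: (constructive_indefinite_description _ H) => x [Hx Hpx] /=.
  by apply: key => // i; rewrite Hpx.
exists Theta; split => // Theta' HT' a Ha.
have [x0 Hx0] := proj_surj (a ord0).
have [x [Hx _ Hpx]] := lift k a Ha x0 Hx0.
have -> : a = (fun i => proj (x i)) by apply: functional_extensionality => i; rewrite Hpx.
by rewrite -[Theta' _]/(pullback Theta' x) -HT' // HT.
Qed.
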